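(* Let $N\ge 1$ and $\tilde m=(0,m_1,\dots,m_{N-1})^T\in\mathbb{R}^{N}$. Let $\tilde a,\tilde b\in\mathbb{R}^N$ be vectors whose first entries both equal $1$ and which satisfy $$\mathcal{T}(\tilde m)\tilde a=\Lambda\tilde a,\qquad \mathcal{T}(\tilde m)\tilde b=-\Lambda\tilde b.$$ Then $\mathcal{T}(\tilde a)\,\mathcal{T}(\tilde b)=I$, the $N\times N$ identity matrix.
   Context: For $\mathbf{x}=(x_1,\dots,x_N)^T\in\mathbb{R}^N$, $\mathcal{T}(\mathbf{x})$ denotes the $N\times N$ lower triangular Toeplitz matrix whose first column is $\mathbf{x}$, i.e. $\mathcal{T}(\mathbf{x})_{ij}=x_{i-j+1}$ for $i\ge j$ and $0$ for $i<j$. $\Lambda=\mathrm{diag}(0,1,2,\dots,N-1)$. *)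

(* Defs.v *)
From HB Require Import structures.
From mathcomp Require Import all_boot all_order all_algebra.
Set Implicit Arguments. Unset Strict Implicit. Unset Printing Implicit Defensive.
Import Order.TTheory GRing.Theory Num.Theory.
Local Open Scope ring_scope.

Lemma toeplitz_idx_lt (N : nat) (i j : 'I_N) : (i - j < N)%N.
Proof. exact: leq_ltn_trans (leq_subr j i) (ltn_ord i). Qed.

Definition toeplitzL (R : pzRingType) (N : nat) (x : 'cV[R]_N) : 'M[R]_N :=
  \matrix_(i < N, j < N)
    if (j <= i)%N then x (Ordinal (toeplitz_idx_lt i j)) ord0 else 0.

Definition Lam (R : pzRingType) (N : nat) : 'M[R]_N :=
  \matrix_(i < N, j < N) if i == j then (i : nat)%:R else 0.

(* Main.v *)
Require Import Defs.
From HB Require Import structures.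
From mathcomp Require Import all_boot all_order all_algebra.
Import Order.TTheory GRing.Theory Num.Theory.
Local Open Scope ring_scope.

Lemma key (R : comNzRingType) (f g : nat -> R) (N i j : nat) (hi : (i < N)%N) :
  \sum_(k < N) ((if (k <= i)%N then f (i - k)%N else 0) *
               (if (j <= k)%N then g (k - j)%N else 0)) =
  if (j <= i)%N then \sum_(l < (i - j).+1) g l * f (i - j - l)%N else 0.
Proof.
rewrite (eq_bigr (fun k : 'I_N => if (j <= k <= i)%N then f (i - k)%N * g (k - j)%N else 0)); last first.
  by move=> k _; case: (k <= i)%N; case: (j <= k)%N; rewrite ?mul0r ?mulr0 ?andbF.
rewrite -big_mkcond /= -(big_mkord (fun k => j <= k <= i)%N (fun k => f (i - k)%N * g (k - j)%N)).
case: leqP => hji.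
  rewrite (big_cat_nat (n:=j)) //=; last by rewrite (leq_trans hji) // ltnW.
  rewrite big_nat_cond big1 ?add0r; last first.
    move=> k /andP [/andP [_ hk] /andP [hjk _]].
    by move: (leq_trans hk hjk); rewrite ltnn.
  rewrite (big_cat_nat (n:=i.+1)) //=.
  rewrite [X in _ + X]big_nat_cond [X in _ + X]big1 ?addr0; last first.
    move=> k /andP [/andP [hk _] /andP [_ hki]].
    by move: (leq_trans hk hki); rewrite ltnn.
  rewrite -{1}(add0n j) big_addn subSn // -(big_mkord xpredT (fun l => g l * f (i - j - l)%N)) big_nat_cond [RHS]big_nat_cond.
  apply: eq_big => k.
    by rewrite leq_addl /= andbT ltnS leq_subRL // addnC andbb.
  move=> _.
  rewrite addnK mulrC; congr (_ * f _).
  by rewrite addnC subnDA.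
  by rewrite ltnW.
rewrite big_nat_cond big1 // => k /andP [_ /andP [h1 h2]].
by move: (leq_trans h1 h2); rewrite leqNgt hji.
Qed.

Section S.
Set Implicit Arguments.
Variable R : realFieldType.
Variable n : nat.

Definition P (x : 'cV[R]_(n.+1)) : {poly R} := \poly_(k < n.+1) x (inord k) 0.

Lemma entryT (x : 'cV[R]_(n.+1)) (i k : 'I_n.+1) :
  toeplitzL x i k = if (k <= i)%N then (P x)`_(i - k) else 0.
Proof.
rewrite mxE coef_poly; case: ifP => // _.
rewrite (toeplitz_idx_lt i k); congr (x _ 0); apply: val_inj.
by rewrite /= inordK // (toeplitz_idx_lt i k).
Qed.

Lemma entryV (x : 'cV[R]_(n.+1)) (k : 'I_n.+1) : x k 0 = (P x)`_k.
Proof. by rewrite coef_poly ltn_ord inord_val. Qed.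

Lemma mulTv (x y : 'cV[R]_(n.+1)) (i : 'I_n.+1) :
  (toeplitzL x *m y) i 0 = (P y * P x)`_i.
Proof.
rewrite mxE coefM.
rewrite (eq_bigr (fun k : 'I_n.+1 => (if (k <= i)%N then (P x)`_(i - k) else 0) *
   (if (0 <= k)%N then (P y)`_(k - 0) else 0))); last first.
  by move=> k _; rewrite entryT entryV subn0.
apply: etrans; first exact: (key _ (fun d => (P x)`_d) (fun d => (P y)`_d) _ _ 0 (ltn_ord i)).
by rewrite subn0.
Qed.

Lemma mulTT (x y : 'cV[R]_(n.+1)) (i j : 'I_n.+1) :
  (toeplitzL x *m toeplitzL y) i j = if (j <= i)%N then (P y * P x)`_(i - j) else 0.
Proof.
rewrite mxE.
rewrite (eq_bigr (fun k : 'I_n.+1 => (if (k <= i)%N then (P x)`_(i - k) else 0) *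
   (if (j <= k)%N then (P y)`_(k - j) else 0))); last first.
  by move=> k _; rewrite !entryT.
apply: etrans; first exact: (key _ (fun d => (P x)`_d) (fun d => (P y)`_d) _ _ j (ltn_ord i)).
by case: ifP => // _; rewrite coefM.
Qed.

Lemma Lam_mul (x : 'cV[R]_(n.+1)) (i : 'I_n.+1) :
  (@Lam R n.+1 *m x) i 0 = (i : nat)%:R * (P x)`_i.
Proof.
rewrite mxE (bigD1 i) //= big1 ?addr0; last first.
  by move=> k hk; rewrite mxE eq_sym (negbTE hk) mul0r.
by rewrite mxE eqxx entryV.
Qed.

Lemma trunc0 (p q : {poly R}) (k : nat) (hk : (k < n.+1)%N)
  (hp : forall j, (j < n.+1)%N -> p`_j = 0) : (p * q)`_k = 0.
Proof.
rewrite coefM big1 // => j _; rewrite hp ?mul0r //.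
exact: leq_trans (ltn_ord j) hk.
Qed.

Lemma coefXD (p : {poly R}) k : ('X * p^`())`_k = k%:R * p`_k.
Proof.
rewrite coefXM; case: k => [|k]; first by rewrite mul0r.
by rewrite /= coef_deriv mulr_natl.
Qed.

End S.

Theorem lemma1 (R : realFieldType) (n : nat)
  (m a b : 'cV[R]_(n.+1))
  (hm0 : m ord0 0 = 0)
  (ha0 : a ord0 0 = 1) (hb0 : b ord0 0 = 1)
  (ha : toeplitzL m *m a = @Lam R n.+1 *m a)
  (hb : toeplitzL m *m b = - (@Lam R n.+1 *m b)) :
  toeplitzL a *m toeplitzL b = 1%:M.
Proof.
set A := @P R n a; set B := @P R n b; set M := @P R n m.
have hA : forall k, (k < n.+1)%N -> ('X * A^`() - A * M)`_k = 0.
  move=> k hk; have := congr1 (fun X : 'cV[R]_n.+1 => X (Ordinal hk) 0) ha => /=.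
  rewrite mulTv Lam_mul /= coefB => h. by rewrite (coefXD A) /A /M h subrr.
have hB : forall k, (k < n.+1)%N -> ('X * B^`() + B * M)`_k = 0.
  move=> k hk; have := congr1 (fun X : 'cV[R]_n.+1 => X (Ordinal hk) 0) hb => /=.
  rewrite mulTv mxE Lam_mul /= coefD => h. by rewrite (coefXD B) /B /M h addrN.
have hC : forall k, (k < n.+1)%N -> ('X * (A * B)^`())`_k = 0.
  move=> k hk.
  have -> : 'X * (A * B)^`() = ('X * A^`() - A * M) * B + A * ('X * B^`() + B * M).
    rewrite derivM mulrDr mulrBl mulrDr addrACA.
    rewrite [X in _ = _ + X](_ : _ = 0) ?addr0; last first.
      by rewrite (mulrC B M) mulrA addNr.
    by congr (_ + _); [rewrite mulrA | rewrite mulrCA].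
  rewrite coefD (@trunc0 _ _ _ B _ hk hA) add0r mulrC (@trunc0 _ _ _ A _ hk hB) //.
have hC0 : forall k, (0 < k < n.+1)%N -> (A * B)`_k = 0.
  move=> k /andP [k0 hk]; have := hC k hk; rewrite (coefXD (A * B)) => /eqP.
  by rewrite mulf_eq0 pnatr_eq0 eqn0Ngt k0 /= => /eqP.
apply/matrixP => i j.
rewrite mulTT !mxE.
case: leqP => hji.
  rewrite -/A -/B mulrC.
  case: (posnP (i - j)) => hd.
    have -> : i = j by apply: val_inj; apply/eqP; rewrite eqn_leq hji -subn_eq0 hd.
    rewrite eqxx subnn coef0M -(@entryV _ _ a ord0) -(@entryV _ _ b ord0) ha0 hb0 mulr1.
    by [].
  rewrite hC0; last by rewrite hd /= (leq_ltn_trans (leq_subr _ _) (ltn_ord i)).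
  have : i != j by apply/eqP => hij; move: hd; rewrite hij subnn.
  by move/negbTE => ->.
have : i != j by apply/eqP => hij; move: hji; rewrite hij ltnn.
by move/negbTE => ->.
Qed.
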